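(* Let $\mathcal{C}$ be a finite set of classes and let $\ell_\star, \ell_a, \ell_b$ be $\mathcal{C}$-valued random variables on a common probability space, where $\ell_\star$ is the oracle label and $\ell_a, \ell_b$ are two predicted labels. Assume that for every $\mathcal{C}$-valued random variable $\ell_\times$ on this space with $\ell_\times \ne \ell_\star$ almost surely (an incorrect label), $$\mathbb{P}(\ell_b = \ell_\star \mid \ell_a \ne \ell_\star) \ge \mathbb{P}(\ell_b = \ell_\times \mid \ell_a \ne \ell_\star).$$ Then $\mathcal{L} := \mathbb{P}(\ell_a = \ell_b) \le \mathbb{P}(\ell_b = \ell_\star)$.
   Context: Conditional probabilities given an event of probability zero are taken to be $0$. *)

(* Defs.v *)
From HB Require Import structures.
From mathcomp Require Import all_boot all_order all_algebra.
From mathcomp Require Import all_classical all_reals all_analysis.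
Set Implicit Arguments. Unset Strict Implicit. Unset Printing Implicit Defensive.
Import Order.TTheory GRing.Theory Num.Theory.
Local Open Scope classical_set_scope.
Local Open Scope ring_scope.

(** A C-valued random variable (C finite, discrete sigma-algebra):
    every level set is measurable. *)
Definition label_rv (d : measure_display) (T : measurableType d) (C : finType)
  (l : T -> C) : Prop := forall c : C, measurable (l @^-1` [set c]).

Definition prob (d : measure_display) (T : measurableType d) (R : realType)
  (P : probability T R) (A : set T) : R := fine (P A).

(** Conditional probability P(A | B), taken to be 0 when P(B) = 0. *)
Definition cprob (d : measure_display) (T : measurableType d) (R : realType)
  (P : probability T R) (A B : set T) : R :=
  if prob P B == 0 then 0 else prob P (A `&` B) / prob P B.

(* Main.v *)
Require Import Defs.
From HB Require Import structures.
From mathcomp Require Import all_boot all_order all_algebra.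
From mathcomp Require Import all_classical all_reals all_analysis.
From mathcomp Require Import lra.
Import Order.TTheory GRing.Theory Num.Theory.
Local Open Scope classical_set_scope.
Local Open Scope ring_scope.

Lemma meas3 (d : measure_display) (T : measurableType d) (C : finType)
  (f g h : T -> C) (p : C -> C -> C -> Prop) :
  label_rv f -> label_rv g -> label_rv h ->
  measurable [set x | p (f x) (g x) (h x)].
Proof.
move=> mf mg mh.
have -> : [set x | p (f x) (g x) (h x)] =
  \bigcup_(t in [set t : C * C * C | p t.1.1 t.1.2 t.2])
     (f @^-1` [set t.1.1] `&` g @^-1` [set t.1.2] `&` h @^-1` [set t.2]).
  apply/seteqP; split => x /=.
    move=> H; exists (f x, g x, h x) => //.
  by case=> [[[a b] c]] /= Hp [[/= -> ->] ->].
apply: fin_bigcup_measurable; first exact: finite_finset.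
move=> t _; apply: measurableI; first apply: measurableI.
- exact: mf.
- exact: mg.
- exact: mh.
Qed.

Lemma prob_ge0 (d : measure_display) (T : measurableType d) (R : realType)
  (P : probability T R) (A : set T) : 0 <= prob P A.
Proof. by apply: fine_ge0; apply: measure_ge0. Qed.

Lemma prob_split (d : measure_display) (T : measurableType d) (R : realType)
  (P : probability T R) (A B : set T) :
  measurable A -> measurable B ->
  prob P A = prob P (A `&` B) + prob P (A `&` ~` B).
Proof.
move=> mA mB.
rewrite {1}(_ : A = (A `&` B) `|` (A `&` ~` B)); last first.
  by rewrite -setIUr setUCr setIT.
rewrite /prob.
rewrite measureU //; last 3 first.
- exact: measurableI.
- by apply: measurableI => //; apply: measurableC.
- by rewrite setIACA setICr setI0.
by rewrite fineD // fin_num_measure //; [exact: measurableI|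
  apply: measurableI => //; apply: measurableC].
Qed.

Arguments prob_split {d T R} P {A B}.
Arguments prob_ge0 {d T R} P A.

Theorem theorem3 (d : measure_display) (T : measurableType d) (R : realType)
  (P : probability T R) (C : finType) (ls la lb : T -> C) :
  label_rv ls -> label_rv la -> label_rv lb ->
  (forall lx : T -> C, label_rv lx ->
     {ae P, forall x, lx x <> ls x} ->
     cprob P [set x | lb x = lx x] [set x | la x <> ls x] <=
     cprob P [set x | lb x = ls x] [set x | la x <> ls x]) ->
  prob P [set x | la x = lb x] <= prob P [set x | lb x = ls x].
Proof.
move=> ms ma mb H.
set E := [set x | la x <> ls x].
have mE : measurable E by have := @meas3 _ _ _ ls la lb (fun a b _ => b <> a) ms ma mb.
have mAB : measurable [set x | la x = lb x]
  by have := @meas3 _ _ _ ls la lb (fun _ b c => b = c) ms ma mb.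
have mBS : measurable [set x | lb x = ls x]
  by have := @meas3 _ _ _ ls la lb (fun a _ c => c = a) ms ma mb.
have K : prob P ([set x | la x = lb x] `&` E) <=
         prob P ([set x | lb x = ls x] `&` E).
  have [[x0 hx0]|E0] := pselect (exists x, la x <> ls x); last first.
    have -> : E = set0.
      by apply/seteqP; split => x //= hx; apply: E0; exists x.
    by rewrite !setI0.
  pose g (a b : C) := if a == b then (if a == ls x0 then la x0 else ls x0)
                      else b.
  pose lx x := g (ls x) (la x).
  have mlx : label_rv lx.
    by move=> c; by have := @meas3 _ _ _ ls la lb (fun a b _ => g a b = c) ms ma mb.
  have nlx : forall x, lx x <> ls x.
    move=> x; rewrite /lx /g; case: eqP => [e|ne].
      case: eqP => [->|ne2]; first by move=> h; apply: hx0.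
      by move=> h; apply: ne2; rewrite h.
    by move=> h; apply: ne.
  have := H lx mlx (aeW _ nlx); rewrite /cprob.
  have -> : [set x | lb x = lx x] `&` E = [set x | la x = lb x] `&` E.
    apply/seteqP; split => x [h1 h2]; split => //=; move: h1 => /=;
    rewrite /lx /g; case: eqP => // e; exfalso; exact: h2 (esym e).
  case: eqP => [pE0 _|pE0].
    have := prob_split P mE mAB; rewrite pE0 setIC => h.
    have h1 := prob_ge0 P ([set x | la x = lb x] `&` E).
    have h2 := prob_ge0 P (E `&` ~` [set x | la x = lb x]).
    have h3 := prob_ge0 P ([set x | lb x = ls x] `&` E).
    have : prob P ([set x | la x = lb x] `&` E) = 0 by lra.
    by move=> ->.
  have pEgt : 0 < prob P E by rewrite lt0r prob_ge0 andbT; apply/eqP.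
  by rewrite ler_pM2r // invr_gt0.
rewrite (prob_split P mAB mE) (prob_split P mBS mE).
have -> : [set x | la x = lb x] `&` ~` E = [set x | lb x = ls x] `&` ~` E.
  apply/seteqP; split => x [h1 h2]; split => //=; move: h1 h2 => /=;
  rewrite /E /=; case: (la x =P ls x) => // e h _; [by rewrite -h e | by rewrite e h].
lra.
Qed.
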